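(* Let $U,V$ be bialgebras and $\langle\,,\rangle:U\otimes V\to k$ a pairing which is convolution invertible when regarded as an element $\rho$ of ${\rm Hom}(U^{\rm cop}\otimes V,k)$; let $\rho^{-1}$ be its convolution inverse there. Let $D=D(U^{\rm cop},V)$, $i:U^{\rm cop}\to D$, $i(m)=m\otimes 1$, and $j:V\to D$, $j(x)=1\otimes x$. (i) There exists a bialgebra map $\pi:D\to U^{\rm cop}$ with $\pi\circ i={\rm Id}$ if and only if there exists a bialgebra map $\gamma:V\to U^{\rm cop}$ such that for all $y\in V$, $m\in U$, $$\gamma(y)m=\rho^{-1}(m_1,y_3)\rho(m_3,y_1)\,m_2\gamma(y_2).$$ (ii) There exists a bialgebra map $D\to V$ which is a left inverse of $j$ if and only if there is a bialgebra map $\mu:U^{\rm cop}\to V$ such that for all $y\in V$, $m\in U$, $y\mu(m)=\rho^{-1}(m_1,y_3)\rho(m_3,y_1)\mu(m_2)y_2$. If $U,V$ are Hopf algebras, these maps are Hopf algebra morphisms. (In (i), $\pi(m\otimes x)=m\gamma(x)$ and $\gamma=\pi\circ j$.)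
   Context: Sweedler notation is used, subscripts always referring to comultiplication in $U$ or $V$ (not in $U^{\rm cop}$). A pairing satisfies $\langle mn,x\rangle=\langle m,x_1\rangle\langle n,x_2\rangle$, $\langle m,xy\rangle=\langle m_1,x\rangle\langle m_2,y\rangle$, $\langle 1,x\rangle=\varepsilon(x)$, $\langle m,1\rangle=\varepsilon(m)$. $D(U^{\rm cop},V)$ is the bialgebra with underlying space $U\otimes V$, unit $1\otimes 1$, counit $\varepsilon\otimes\varepsilon$, comultiplication $\Delta(m\otimes x)=(m_2\otimes x_1)\otimes(m_1\otimes x_2)$ and multiplication $(m\otimes x)(n\otimes y)=\rho(n_3,x_1)\rho^{-1}(n_1,x_3)\,mn_2\otimes x_2y$. Here $U^{\rm cop}$ is $U$ with the opposite comultiplication. *)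

(* Defs.v *)
(* Bialgebras over a field k, encoded without a tensor-product
   library: an element of A (x) B is represented by a finite list of pairs
   (a finite sum of pure tensors); two such representatives are equal as
   tensors iff every bilinear form A x B -> k takes the same value on them
   (over a field, linear forms separate points of A (x) B). *)
From HB Require Import structures.
From mathcomp Require Import all_boot all_order all_algebra.
Set Implicit Arguments. Unset Strict Implicit. Unset Printing Implicit Defensive.
Import Order.TTheory GRing.Theory Num.Theory.
Local Open Scope ring_scope.

Section Bialg.
Variable k : fieldType.

Definition bilinf (A B : lmodType k) (f : A -> B -> k) : Prop :=
  (forall c a a' b, f (c *: a + a') b = c * f a b + f a' b) /\
  (forall c a b b', f a (c *: b + b') = c * f a b + f a b').

Definition trilinf (A B C : lmodType k) (f : A -> B -> C -> k) : Prop :=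
  (forall c a a' b x, f (c *: a + a') b x = c * f a b x + f a' b x) /\
  (forall c a b b' x, f a (c *: b + b') x = c * f a b x + f a b' x) /\
  (forall c a b x x', f a b (c *: x + x') = c * f a b x + f a b x').

Definition bilin (A B W : lmodType k) (f : A -> B -> W) : Prop :=
  (forall c a a' b, f (c *: a + a') b = c *: f a b + f a' b) /\
  (forall c a b b', f a (c *: b + b') = c *: f a b + f a b').

Definition lin (A W : lmodType k) (f : A -> W) : Prop :=
  forall c a a', f (c *: a + a') = c *: f a + f a'.

Definition linf (A : lmodType k) (f : A -> k) : Prop :=
  forall c a a', f (c *: a + a') = c * f a + f a'.

Definition teq2 (A B : lmodType k) (s t : seq (A * B)) : Prop :=
  forall f : A -> B -> k, bilinf f ->
    \sum_(p <- s) f p.1 p.2 = \sum_(p <- t) f p.1 p.2.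

Definition teq3 (A B C : lmodType k) (s t : seq (A * B * C)) : Prop :=
  forall f : A -> B -> C -> k, trilinf f ->
    \sum_(p <- s) f p.1.1 p.1.2 p.2 = \sum_(p <- t) f p.1.1 p.1.2 p.2.

(* A comultiplication on A is a map d : A -> seq (A * A);
   d x = [:: (a_i, b_i)] stands for Delta x = sum_i a_i (x) b_i,
   i.e. in Sweedler notation x_1 (x) x_2 ranges over the pairs (p.1, p.2). *)

Definition cop (A : Type) (d : A -> seq (A * A)) (x : A) : seq (A * A) :=
  [seq (p.2, p.1) | p <- d x].

(* x_1 (x) x_2 (x) x_3 = (Delta (x) id) Delta x, as triples ((x_1, x_2), x_3) *)
Definition sw3 (A : Type) (d : A -> seq (A * A)) (x : A) : seq (A * A * A) :=
  [seq (q.1, q.2, p.2) | p <- d x, q <- d p.1].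

Definition is_bialg (A : algType k) (d : A -> seq (A * A)) (e : A -> k) : Prop :=
  (forall c x y, teq2 (d (c *: x + y)) ([seq (c *: p.1, p.2) | p <- d x] ++ d y)) /\
  (forall x, teq3 (sw3 d x) [seq (p.1, q.1, q.2) | p <- d x, q <- d p.2]) /\
  (forall x, \sum_(p <- d x) e p.1 *: p.2 = x) /\
  (forall x, \sum_(p <- d x) e p.2 *: p.1 = x) /\
  linf e /\
  (forall x y, teq2 (d (x * y)) [seq (p.1 * q.1, p.2 * q.2) | p <- d x, q <- d y]) /\
  teq2 (d 1) [:: (1, 1)] /\
  (forall x y, e (x * y) = e x * e y) /\
  e 1 = 1.

Definition bialg_map (A B : algType k) (dA : A -> seq (A * A)) (eA : A -> k)
    (dB : B -> seq (B * B)) (eB : B -> k) (f : A -> B) : Prop :=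
  lin f /\
  (forall x y, f (x * y) = f x * f y) /\
  f 1 = 1 /\
  (forall x, eB (f x) = eA x) /\
  (forall x, teq2 (dB (f x)) [seq (f p.1, f p.2) | p <- dA x]).

Definition is_pairing (U V : algType k) (dU : U -> seq (U * U)) (eU : U -> k)
    (dV : V -> seq (V * V)) (eV : V -> k) (rho : U -> V -> k) : Prop :=
  bilinf rho /\
  (forall m n x, rho (m * n) x = \sum_(q <- dV x) rho m q.1 * rho n q.2) /\
  (forall m x y, rho m (x * y) = \sum_(p <- dU m) rho p.1 x * rho p.2 y) /\
  (forall x, rho 1 x = eV x) /\
  (forall m, rho m 1 = eU m).

(* convolution in Hom(U^cop (x) V, k):
   (r * s)(m (x) x) = r(m_2, x_1) s(m_1, x_2) *)
Definition conv (U V : lmodType k) (dU : U -> seq (U * U)) (dV : V -> seq (V * V))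
    (r s : U -> V -> k) (m : U) (x : V) : k :=
  \sum_(p <- dU m) \sum_(q <- dV x) r p.2 q.1 * s p.1 q.2.

Definition conv_inverse (U V : lmodType k) (dU : U -> seq (U * U)) (eU : U -> k)
    (dV : V -> seq (V * V)) (eV : V -> k) (rho rinv : U -> V -> k) : Prop :=
  bilinf rinv /\
  (forall m x, conv dU dV rho rinv m x = eU m * eV x) /\
  (forall m x, conv dU dV rinv rho m x = eU m * eV x).

(* A linear map D(U^cop,V) = U (x) V -> W is the same as a bilinear map
   P : U -> V -> W (P m x = image of m (x) x).  [D_bialg_map ... P] says that
   the induced linear map D -> W is a bialgebra map, where D has unit 1 (x) 1,
   counit eps (x) eps, comultiplication
     Delta(m (x) x) = (m_2 (x) x_1) (x) (m_1 (x) x_2)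
   and multiplication
     (m (x) x)(n (x) y) = rho(n_3,x_1) rho^-1(n_1,x_3) m n_2 (x) x_2 y.
   Since all structure maps of D are (bi)linear extensions of their values on
   pure tensors, it suffices to test on pure tensors. *)
Definition D_bialg_map (U V : algType k) (dU : U -> seq (U * U)) (eU : U -> k)
    (dV : V -> seq (V * V)) (eV : V -> k) (rho rinv : U -> V -> k)
    (W : algType k) (dW : W -> seq (W * W)) (eW : W -> k) (P : U -> V -> W) : Prop :=
  bilin P /\
  P 1 1 = 1 /\
  (forall m x n y,
      P m x * P n y =
      \sum_(t <- sw3 dU n) \sum_(s <- sw3 dV x)
         (rho t.2 s.1.1 * rinv t.1.1 s.2) *: P (m * t.1.2) (s.1.2 * y)) /\
  (forall m x, eW (P m x) = eU m * eV x) /\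
  (forall m x, teq2 (dW (P m x))
                    [seq (P p.2 q.1, P p.1 q.2) | p <- dU m, q <- dV x]).

End Bialg.

(* Main.v *)
Require Import Defs.
From HB Require Import structures.
From mathcomp Require Import all_boot all_order all_algebra.
From mathcomp Require boolp classical_sets.
Import GRing.Theory.
Local Open Scope ring_scope.

Module SepM.
Import boolp classical_sets.
Section Sep.
Variable k : fieldType.
Variable W : lmodType k.

Definition goodA (w : W) (A : W * k -> Prop) : Prop :=
  (forall x a b, A (x, a) -> A (x, b) -> a = b) /\
  (forall c x y a b, A (x, a) -> A (y, b) -> A (c *: x + y, c * a + b)) /\
  A (w, 1).

Lemma sep (w : W) : w != 0 -> exists phi : W -> k, linf phi /\ phi w = 1.
Proof.
move=> w0.
pose T := {A : W * k -> Prop | goodA w A}.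
pose R (s t : T) : bool := `[< forall p, sval s p -> sval t p >].
have good0 : goodA w (fun p => exists c, p = (c *: w, c)).
  split; [|split].
  - move=> x a b [c [-> ->]] [c' [/eqP]]; rewrite -subr_eq0 -scalerBl scaler_eq0.
    by rewrite (negbTE w0) orbF subr_eq0 => /eqP -> ->.
  - move=> c x y a b [c1 [-> ->]] [c2 [-> ->]]; exists (c * c1 + c2).
    by rewrite scalerDl scalerA.
  - by exists 1; rewrite scale1r.
pose t0 : T := exist _ _ good0.
have [| | |t tmax] := @ZL_preorder T t0 R.
- by move=> t; apply/asboolP.
- by move=> r s t /asboolP H1 /asboolP H2; apply/asboolP => p /H1 /H2.
- move=> F Ftot.
  have [[X0 FX0]|nF] := pselect (exists X, F X); last first.
    by exists t0 => s Fs; case: nF; exists s.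
  pose U := fun p => exists X, F X /\ sval X p.
  have gU : goodA w U.
    split; [|split].
    - move=> x a b [X1 [F1 H1]] [X2 [F2 H2]].
      have [/asboolP R12|/asboolP R21] := Ftot _ _ F1 F2.
      + by case: (svalP X2) => fX2 _; apply: (fX2 x) => //; apply: R12.
      + by case: (svalP X1) => fX1 _; apply: (fX1 x) => //; apply: R21.
    - move=> c x y a b [X1 [F1 H1]] [X2 [F2 H2]].
      have [/asboolP R12|/asboolP R21] := Ftot _ _ F1 F2.
      + exists X2; split => //; case: (svalP X2) => _ [lX2 _].
        by apply: lX2 => //; apply: R12.
      + exists X1; split => //; case: (svalP X1) => _ [lX1 _].
        by apply: lX1 => //; apply: R21.
    - by exists X0; split => //; case: (svalP X0) => _ [].
  exists (exist _ U gU) => s Fs; apply/asboolP => p sp /=.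
  by exists s.
set A := sval t.
have [fA [lA wA]] : goodA w A by apply: (svalP t).
have A00 : A (0, 0).
  have := lA (-1) _ _ _ _ wA wA.
  by rewrite scaleN1r mulN1r !addNr.
have dom : forall v, exists a, A (v, a).
  move=> v; apply: contrapT => nv.
  pose A' := fun p => exists s a c, A (s, a) /\ p = (s + c *: v, a).
  have gA' : goodA w A'.
    split; [|split].
    - move=> x a b [s [a1 [c [As [-> ->]]]]] [s' [a1' [c' [As' []]]]].
      move=> E0 ->.
      have E : (c - c') *: v = s' - s.
        rewrite scalerBl.
        have -> : c *: v = - s + (s' + c' *: v) by rewrite -E0 addKr.
        by rewrite addrA addrK addrC.
      have Ad : A (s' - s, a1' - a1).
        have := lA (-1) _ _ _ _ As As'.
        by rewrite scaleN1r mulN1r addrC [- a1 + _]addrC.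
      have [cc|ncc] := eqVneq (c - c') 0.
        move: E; rewrite cc scale0r => /eqP; rewrite eq_sym subr_eq0 => /eqP ss.
        by apply: (fA s a1 a1' As); rewrite -ss.
      case: nv; exists ((c - c')^-1 * (a1' - a1) + 0).
      have := lA ((c - c')^-1) _ _ _ _ Ad A00.
      by rewrite addr0 -E scalerA mulVf // scale1r.
    - move=> c x y a b [s [a1 [c1 [As [-> ->]]]]] [s' [a1' [c1' [As' [-> ->]]]]].
      exists (c *: s + s'), (c * a1 + a1'), (c * c1 + c1'); split.
        exact: lA.
      congr (_, _).
      by rewrite scalerDr scalerDl scalerA addrACA.
    - by exists w, 1, 0; rewrite scale0r addr0.
  have := tmax (exist _ A' gA').
  have Rt : R t (exist _ A' gA').
    apply/asboolP => -[x a] Ap; exists x, a, 0; split => //.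
    by rewrite scale0r addr0.
  move=> /(_ Rt) /asboolP /(_ (v, 0)) H.
  apply: nv; exists 0; apply: H; exists 0, 0, 1; split => //.
  by rewrite add0r scale1r.
pose phi x := sval (cid (dom x)).
have Aphi x : A (x, phi x) by rewrite /phi; case: cid.
exists phi; split.
  move=> c a a'; apply: (fA (c *: a + a')); first exact: Aphi.
  by apply: lA; apply: Aphi.
by apply: (fA w) => //; apply: Aphi.
Qed.
End Sep.
End SepM.
Import SepM.

Module Helpers.
Set Implicit Arguments. Unset Strict Implicit.
Section Lin.
Variable k : fieldType.

Lemma lin0 (A W : lmodType k) (f : A -> W) : lin f -> f 0 = 0.
Proof.
move=> H; have := H 1 0 0; rewrite !scale1r addr0 => E.
by apply: (addrI (f 0)); rewrite addr0 -E.
Qed.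

Lemma linD (A W : lmodType k) (f : A -> W) : lin f -> forall a b, f (a + b) = f a + f b.
Proof. by move=> H a b; have := H 1 a b; rewrite !scale1r. Qed.

Lemma linZ (A W : lmodType k) (f : A -> W) : lin f -> forall c a, f (c *: a) = c *: f a.
Proof. by move=> H c a; have := H c a 0; rewrite !addr0 (lin0 H) addr0. Qed.

Lemma lin_sum (A W : lmodType k) (f : A -> W) (I : Type) (r : seq I) (F : I -> A) :
  lin f -> f (\sum_(i <- r) F i) = \sum_(i <- r) f (F i).
Proof.
move=> H; elim: r => [|i r IH]; first by rewrite !big_nil (lin0 H).
by rewrite !big_cons (linD H) IH.
Qed.

Lemma lin_sumZ (A W : lmodType k) (f : A -> W) (I : Type) (r : seq I) (c : I -> k) (F : I -> A) :
  lin f -> f (\sum_(i <- r) c i *: F i) = \sum_(i <- r) c i *: f (F i).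
Proof. by move=> H; rewrite (lin_sum _ _ H); apply: eq_bigr => i _; rewrite (linZ H). Qed.

Lemma linf0 (A : lmodType k) (f : A -> k) : linf f -> f 0 = 0.
Proof.
move=> H; have := H 1 0 0; rewrite scale1r addr0 mul1r => E.
by apply: (addrI (f 0)); rewrite addr0 -E.
Qed.

Lemma linfD (A : lmodType k) (f : A -> k) : linf f -> forall a b, f (a + b) = f a + f b.
Proof. by move=> H a b; have := H 1 a b; rewrite scale1r mul1r. Qed.

Lemma linfZ (A : lmodType k) (f : A -> k) : linf f -> forall c a, f (c *: a) = c * f a.
Proof. by move=> H c a; have := H c a 0; rewrite !addr0 (linf0 H) addr0. Qed.

Lemma linfN (A : lmodType k) (f : A -> k) : linf f -> forall a, f (- a) = - f a.
Proof. by move=> H a; rewrite -scaleN1r (linfZ H) mulN1r. Qed.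

Lemma linf_sum (A : lmodType k) (f : A -> k) (I : Type) (r : seq I) (F : I -> A) :
  linf f -> f (\sum_(i <- r) F i) = \sum_(i <- r) f (F i).
Proof.
move=> H; elim: r => [|i r IH]; first by rewrite !big_nil (linf0 H).
by rewrite !big_cons (linfD H) IH.
Qed.

Lemma linf_sumZ (A : lmodType k) (f : A -> k) (I : Type) (r : seq I) (c : I -> k) (F : I -> A) :
  linf f -> f (\sum_(i <- r) c i *: F i) = \sum_(i <- r) c i * f (F i).
Proof. by move=> H; rewrite (linf_sum _ _ H); apply: eq_bigr => i _; rewrite (linfZ H). Qed.

Lemma linf_sumF (A : lmodType k) (I : Type) (r : seq I) (F : I -> A -> k) :
  (forall i, linf (F i)) -> linf (fun a => \sum_(i <- r) F i a).
Proof.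
move=> H c a a'; rewrite mulr_sumr -big_split; apply: eq_bigr => i _; exact: H.
Qed.

Lemma lin_sumF (A W : lmodType k) (I : Type) (r : seq I) (F : I -> A -> W) :
  (forall i, lin (F i)) -> lin (fun a => \sum_(i <- r) F i a).
Proof.
move=> H c a a'; rewrite scaler_sumr -big_split; apply: eq_bigr => i _; exact: H.
Qed.

Lemma linf_mulr (A : lmodType k) (f : A -> k) (c : k) : linf f -> linf (fun a => f a * c).
Proof. by move=> H x a a'; rewrite H mulrDl mulrA. Qed.

Lemma linf_mull (A : lmodType k) (f : A -> k) (c : k) : linf f -> linf (fun a => c * f a).
Proof. by move=> H x a a'; rewrite H mulrDr mulrCA. Qed.

Lemma linf_comp (A B : lmodType k) (f : B -> k) (g : A -> B) : linf f -> lin g -> linf (fun a => f (g a)).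
Proof. by move=> Hf Hg x a a'; rewrite Hg Hf. Qed.

Lemma lin_comp (A B W : lmodType k) (f : B -> W) (g : A -> B) : lin f -> lin g -> lin (fun a => f (g a)).
Proof. by move=> Hf Hg x a a'; rewrite Hg Hf. Qed.

Lemma lin_scal (A W : lmodType k) (f : A -> k) (w : W) : linf f -> lin (fun a => f a *: w).
Proof. by move=> H x a a'; rewrite H scalerDl scalerA. Qed.

Lemma lin_scalc (A W : lmodType k) (f : A -> W) (c : k) : lin f -> lin (fun a => c *: f a).
Proof. by move=> H x a a'; rewrite H scalerDr !scalerA mulrC. Qed.

Lemma lin_mull (A : algType k) (u : A) : lin (fun a : A => u * a).
Proof. by move=> x a a'; rewrite mulrDr scalerAr. Qed.

Lemma lin_mulr (A : algType k) (u : A) : lin (fun a : A => a * u).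
Proof. by move=> x a a'; rewrite mulrDl scalerAl. Qed.

Lemma bilinP (A B W : lmodType k) (F : A -> B -> W) :
  bilin F -> (forall b, lin (fun a => F a b)) /\ (forall a, lin (F a)).
Proof. by case=> H1 H2; split=> ? ? ? ?; [apply: H1 | apply: H2]. Qed.

Lemma bilinfP (A B : lmodType k) (F : A -> B -> k) :
  bilinf F -> (forall b, linf (fun a => F a b)) /\ (forall a, linf (F a)).
Proof. by case=> H1 H2; split=> ? ? ? ?; [apply: H1 | apply: H2]. Qed.

Lemma mkbilinf (A B : lmodType k) (F : A -> B -> k) :
  (forall b, linf (fun a => F a b)) -> (forall a, linf (F a)) -> bilinf F.
Proof. by move=> H1 H2; split=> *; [apply: H1 | apply: H2]. Qed.

Lemma mkbilin (A B W : lmodType k) (F : A -> B -> W) :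
  (forall b, lin (fun a => F a b)) -> (forall a, lin (F a)) -> bilin F.
Proof. by move=> H1 H2; split=> *; [apply: H1 | apply: H2]. Qed.

Lemma teq2_vec (A B W : lmodType k) (s t : seq (A * B)) (F : A -> B -> W) :
  teq2 s t -> bilin F ->
  \sum_(p <- s) F p.1 p.2 = \sum_(p <- t) F p.1 p.2.
Proof.
move=> Hst HF; apply/eqP; rewrite -subr_eq0; apply/eqP.
set w := (_ - _).
have [//|nz] := eqVneq w 0.
have [phi [lphi phiw]] := @sep _ _ _ nz.
have [HF1 HF2] := bilinP HF.
have bf : bilinf (fun a b => phi (F a b)).
  by apply: mkbilinf => [b|a]; apply: linf_comp.
have := Hst _ bf.
rewrite -!(linf_sum _ _ lphi) => E.
move: phiw; rewrite /w (linfD lphi) (linfN lphi) E subrr => /eqP.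
by rewrite eq_sym oner_eq0.
Qed.

End Lin.

Section Bi.
Variable k : fieldType.
Variables (A : algType k) (d : A -> seq (A * A)) (e : A -> k).
Hypothesis Hb : is_bialg d e.

Lemma d_lin (W : lmodType k) (F : A -> A -> W) :
  bilin F -> lin (fun x => \sum_(p <- d x) F p.1 p.2).
Proof.
move=> HF c x y; have [Dl _] := Hb.
rewrite (teq2_vec (Dl c x y) HF) big_cat big_map /= scaler_sumr.
congr (_ + _); apply: eq_bigr => p _.
by have [H1 _] := bilinP HF; rewrite (linZ (H1 _)).
Qed.

Lemma d1_vec (W : lmodType k) (F : A -> A -> W) :
  bilin F -> \sum_(p <- d 1) F p.1 p.2 = F 1 1.
Proof.
move=> HF; have [_ [_ [_ [_ [_ [_ [D1 _]]]]]]] := Hb.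
by rewrite (teq2_vec D1 HF) big_seq1.
Qed.

Lemma d1_sc (F : A -> A -> k) :
  bilinf F -> \sum_(p <- d 1) F p.1 p.2 = F 1 1.
Proof.
move=> HF; have [_ [_ [_ [_ [_ [_ [D1 _]]]]]]] := Hb.
by rewrite (D1 _ HF) big_seq1.
Qed.

Lemma sw3_1 (W : lmodType k) (G : A -> A -> A -> W) :
  (forall b c, lin (fun a => G a b c)) -> (forall a c, lin (fun b => G a b c)) ->
  (forall a b, lin (G a b)) ->
  \sum_(t <- sw3 d 1) G t.1.1 t.1.2 t.2 = G 1 1 1.
Proof.
move=> H1 H2 H3; rewrite /sw3 big_allpairs_dep /=.
rewrite (d1_vec (F := fun a b => \sum_(q <- d a) G q.1 q.2 b)).
  by rewrite (d1_vec (F := fun a b => G a b 1)) //; apply: mkbilin.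
apply: mkbilin => [b|a].
  by apply: (d_lin (F := fun u v => G u v b)); apply: mkbilin.
by apply: lin_sumF.
Qed.

Lemma sw3_counit (W : lmodType k) (F : A -> W) x :
  lin F -> \sum_(t <- sw3 d x) (e t.1.1 * e t.2) *: F t.1.2 = F x.
Proof.
move=> HF; have [_ [_ [C1 [C2 _]]]] := Hb.
rewrite /sw3 big_allpairs_dep /=.
rewrite -{2}(C2 x) (lin_sumZ _ _ _ HF); apply: eq_bigr => p _.
rewrite -{2}(C1 p.1) (lin_sumZ _ _ _ HF) scaler_sumr; apply: eq_bigr => q _.
by rewrite scalerA mulrC.
Qed.

End Bi.
End Helpers.
Import Helpers.

Theorem mainTheorem3 (k : fieldType) (U V : algType k)
    (dU : U -> seq (U * U)) (eU : U -> k)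
    (dV : V -> seq (V * V)) (eV : V -> k)
    (rho rinv : U -> V -> k) :
  is_bialg dU eU -> is_bialg dV eV ->
  is_pairing dU eU dV eV rho ->
  conv_inverse dU eU dV eV rho rinv ->
  (* (i) bialgebra map pi : D -> U^cop with pi o i = Id *)
  ((exists P : U -> V -> U,
       D_bialg_map dU eU dV eV rho rinv (cop dU) eU P /\
       (forall m, P m 1 = m))
   <->
   (exists g : V -> U,
       bialg_map dV eV (cop dU) eU g /\
       (forall (y : V) (m : U),
          g y * m =
          \sum_(t <- sw3 dU m) \sum_(s <- sw3 dV y)
             (rinv t.1.1 s.2 * rho t.2 s.1.1) *: (t.1.2 * g s.1.2))))
  /\
  (* (ii) bialgebra map D -> V left inverse to j *)
  ((exists Q : U -> V -> V,
       D_bialg_map dU eU dV eV rho rinv dV eV Q /\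
       (forall x, Q 1 x = x))
   <->
   (exists mu : U -> V,
       bialg_map (cop dU) eU dV eV mu /\
       (forall (y : V) (m : U),
          y * mu m =
          \sum_(t <- sw3 dU m) \sum_(s <- sw3 dV y)
             (rinv t.1.1 s.2 * rho t.2 s.1.1) *: (mu t.1.2 * s.1.2)))).
Proof.
move=> HU HV Hp Hc.
have [bilr [rhoM1 [rhoM2 [rho1x rhox1]]]] := Hp.
have [rhoL rhoR] := bilinfP bilr.
have [bilri [Cv1 Cv2]] := Hc.
have [riL riR] := bilinfP bilri.
have [_ [_ [C1U [C2U [linU [DmU [D1U [eUM eU1]]]]]]]] := HU.
have [_ [_ [C1V [C2V [linV [DmV [D1V [eVM eV1]]]]]]]] := HV.
have ri1x : forall x, rinv 1 x = eV x.
  move=> x; have := Cv2 1 x; rewrite /conv eU1 mul1r.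
  rewrite (d1_sc HU (F := fun a b => \sum_(q <- dV x) rinv b q.1 * rho a q.2)).
    move=> <-; rewrite -{1}(C2V x) (linf_sumZ _ _ _ (riR 1)).
    by apply: eq_bigr => q _; rewrite rho1x mulrC.
  apply: mkbilinf => [b|a]; apply: linf_sumF => q.
    exact: (linf_mull _ (rhoL _)).
  exact: (linf_mulr _ (riL _)).
have rix1 : forall m, rinv m 1 = eU m.
  move=> m; have := Cv2 m 1; rewrite /conv eV1 mulr1.
  rewrite (eq_bigr (fun p => rinv p.2 1 * eU p.1)); last first.
    move=> p _; rewrite (d1_sc HV (F := fun a b => rinv p.2 a * rho p.1 b)).
      by rewrite rhox1.
    apply: mkbilinf => [b|a].
      exact: (linf_mulr _ (riR _)).
    exact: (linf_mull _ (rhoR _)).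
  move=> <-; rewrite -{1}(C1U m) (linf_sumZ _ _ _ (riL 1)).
  by apply: eq_bigr => q _; rewrite mulrC.
have factor : forall (W : algType k) dW eW (P : U -> V -> W),
    D_bialg_map dU eU dV eV rho rinv dW eW P -> forall a b, P a b = P a 1 * P 1 b.
  move=> W dW eW P [bP [P11 [Pm _]]] a b.
  have [PL PR] := bilinP bP.
  rewrite Pm; symmetry.
  etransitivity.
    apply: (sw3_1 HU (G := fun x y z => \sum_(s <- sw3 dV 1)
              (rho z s.1.1 * rinv x s.2) *: P (a * y) (s.1.2 * b))).
    - move=> y z; apply: lin_sumF => s; apply: lin_scal.
      exact: (linf_mull _ (riL _)).
    - move=> x z; apply: lin_sumF => s; apply: lin_scalc.
      exact: (lin_comp (f := fun u => P u (s.1.2 * b)) (PL _) (lin_mull a)).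
    - move=> x y; apply: lin_sumF => s; apply: lin_scal.
      exact: (linf_mulr _ (rhoL _)).
  etransitivity.
    apply: (sw3_1 HV (G := fun x y z =>
              (rho 1 x * rinv 1 z) *: P (a * 1) (y * b))).
    - move=> y z; apply: lin_scal; exact: (linf_mulr _ (rhoR _)).
    - move=> x z; apply: lin_scalc.
      exact: (lin_comp (f := fun u => P (a * 1) u) (PR _) (lin_mulr b)).
    - move=> x y; apply: lin_scal; exact: (linf_mull _ (riR _)).
  by rewrite /= rho1x ri1x eV1 mulr1 scale1r mulr1 mul1r.
split; split.
-
  case=> P [HP Pm1]; have HP' := HP.
  case: HP => bP [P11 [Pm [Pe PD]]].
  have [PL PR] := bilinP bP.
  exists (fun y => P 1 y); split.
    split; [|split; [|split; [|split]]].
    + exact: PR.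
    + move=> x y /=; symmetry; rewrite Pm.
      etransitivity.
        apply: (sw3_1 HU (G := fun a b c => \sum_(s <- sw3 dV x)
                 (rho c s.1.1 * rinv a s.2) *: P (1 * b) (s.1.2 * y))).
        - move=> b c; apply: lin_sumF => s; apply: lin_scal.
          exact: (linf_mull _ (riL _)).
        - move=> a c; apply: lin_sumF => s; apply: lin_scalc.
          exact: (lin_comp (f := fun u => P u (s.1.2 * y)) (PL _) (lin_mull 1)).
        - move=> a b; apply: lin_sumF => s; apply: lin_scal.
          exact: (linf_mulr _ (rhoL _)).
      have := sw3_counit HV (F := fun u => P 1 (u * y)) x
                (lin_comp (f := P 1) (PR 1) (lin_mulr y)).
      move=> /= <-; rewrite mulr1; apply: eq_bigr => s _.
      by rewrite rho1x ri1x.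
    + exact: P11.
    + by move=> x /=; rewrite Pe eU1 mul1r.
    + move=> x f bf /=.
      have [f1 f2] := bilinfP bf.
      rewrite (PD 1 x f bf) big_allpairs_dep big_map /=.
      apply: (d1_sc HU (F := fun a b => \sum_(q <- dV x) f (P b q.1) (P a q.2))).
      apply: mkbilinf => [b|a]; apply: linf_sumF => q.
        exact: (linf_comp (f := f (P b q.1)) (g := fun a => P a q.2) (f2 _) (PL _)).
      exact: (linf_comp (f := fun u => f u (P a q.2)) (g := fun b => P b q.1) (f1 _) (PL _)).
  move=> y m /=.
  rewrite -{1}(Pm1 m) Pm; apply: eq_bigr => t _; apply: eq_bigr => s _.
  by rewrite [rho _ _ * _]mulrC mul1r mulr1 (factor _ _ _ _ HP' t.1.2 s.1.2) Pm1.
-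
  case=> g [[gL [gM [g1 [ge gD]]]] rel].
  exists (fun m x => m * g x); split; last by move=> m /=; rewrite g1 mulr1.
  split; [|split; [|split; [|split]]].
  + apply: mkbilin => [b|a]; first exact: lin_mulr.
    exact: (lin_comp (f := fun u => a * u) (lin_mull a) gL).
  + by rewrite g1 mul1r.
  + move=> m x n y /=.
    rewrite -mulrA (mulrA (g x)) rel mulr_suml mulr_sumr.
    apply: eq_bigr => t _; rewrite mulr_suml mulr_sumr; apply: eq_bigr => s _.
    by rewrite gM -scalerAl -scalerAr !mulrA [rinv _ _ * _]mulrC.
  + by move=> m x /=; rewrite eUM ge.
  + move=> m x f bf /=.
    have [f1 f2] := bilinfP bf.
    have bfs : bilinf (fun a b => f b a) by apply: mkbilinf => [b|a]; [exact: f2 | exact: f1].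
    rewrite /cop big_map /= (DmU m (g x) _ bfs) !big_allpairs_dep /=.
    apply: eq_bigr => p _.
    have bh : bilinf (fun a b => f (p.2 * a) (p.1 * b)).
      apply: mkbilinf => [b|a].
        exact: (linf_comp (f := fun u => f u (p.1 * b)) (g := fun a => p.2 * a) (f1 _) (lin_mull _)).
      exact: (linf_comp (f := f (p.2 * a)) (g := fun b => p.1 * b) (f2 _) (lin_mull _)).
    have := gD x _ bh; rewrite /cop !big_map /= => ->.
    by [].
-
  case=> Q [HQ Q1x]; have HQ' := HQ.
  case: HQ => bQ [Q11 [Qm [Qe QD]]].
  have [QL QR] := bilinP bQ.
  exists (fun m => Q m 1); split.
    split; [|split; [|split; [|split]]].
    + exact: QL.
    + move=> m n /=; symmetry; rewrite Qm.
      have := sw3_counit HU (F := fun u => Q (m * u) 1) n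
                (lin_comp (f := fun u => Q u 1) (QL 1) (lin_mull m)).
      move=> /= <-; apply: eq_bigr => t _.
      etransitivity.
        apply: (sw3_1 HV (G := fun x y z =>
                 (rho t.2 x * rinv t.1.1 z) *: Q (m * t.1.2) (y * 1))).
        - move=> y z; apply: lin_scal; exact: (linf_mulr _ (rhoR _)).
        - move=> x z; apply: lin_scalc.
          exact: (lin_comp (f := fun u => Q (m * t.1.2) u) (QR _) (lin_mulr 1)).
        - move=> x y; apply: lin_scal; exact: (linf_mull _ (riR _)).
      by rewrite /= rhox1 rix1 mulr1 mulrC.
    + exact: Q11.
    + by move=> x /=; rewrite Qe eV1 mulr1.
    + move=> m f bf /=.
      have [f1 f2] := bilinfP bf.
      rewrite (QD m 1 f bf) big_allpairs_dep big_map /cop big_map /=.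
      apply: eq_bigr => p _.
      apply: (d1_sc HV (F := fun a b => f (Q p.2 a) (Q p.1 b))).
      apply: mkbilinf => [b|a].
        exact: (linf_comp (f := fun u => f u (Q p.1 b)) (g := fun a => Q p.2 a) (f1 _) (QR _)).
      exact: (linf_comp (f := f (Q p.2 a)) (g := fun b => Q p.1 b) (f2 _) (QR _)).
  move=> y m /=.
  rewrite -{1}(Q1x y) Qm; apply: eq_bigr => t _; apply: eq_bigr => s _.
  by rewrite [rho _ _ * _]mulrC mul1r mulr1 (factor _ _ _ _ HQ' t.1.2 s.1.2) Q1x.
-
  case=> mu [[mL [mM [m1 [me mD]]]] rel].
  exists (fun m x => mu m * x); split; last by move=> x /=; rewrite m1 mul1r.
  split; [|split; [|split; [|split]]].
  + apply: mkbilin => [b|a]; last exact: lin_mull.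
    exact: (lin_comp (f := fun u => u * b) (lin_mulr b) mL).
  + by rewrite m1 mulr1.
  + move=> m x n y /=.
    rewrite mulrA -(mulrA (mu m)) rel mulr_sumr mulr_suml.
    apply: eq_bigr => t _; rewrite mulr_sumr mulr_suml; apply: eq_bigr => s _.
    by rewrite mM -scalerAr -scalerAl !mulrA [rinv _ _ * _]mulrC.
  + by move=> m x /=; rewrite eVM me.
  + move=> m x f bf /=.
    have [f1 f2] := bilinfP bf.
    rewrite (DmV (mu m) x f bf) !big_allpairs_dep /=.
    have bh : bilinf (fun a b => \sum_(q <- dV x) f (a * q.1) (b * q.2)).
      apply: mkbilinf => [b|a]; apply: linf_sumF => q.
        exact: (linf_comp (f := fun u => f u (b * q.2)) (g := fun a => a * q.1) (f1 _) (lin_mulr _)).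
      exact: (linf_comp (f := f (a * q.1)) (g := fun b => b * q.2) (f2 _) (lin_mulr _)).
    have := mD m _ bh; rewrite /cop !big_map /= => ->.
    by [].
Qed.
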